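(* Let $K$ be a field of characteristic $\neq 2$ and $A\in K\setminus\{0\}$ a non-zero constant. Then $x^2+y^2+z^2=Axyz$ has a fundamental Markoff triple if and only if $K$ contains a square root $i$ of $-1$. Moreover, if $i\in K$, every fundamental Markoff triple has one of the forms $$(0,\varepsilon if,f)\qquad\text{or}\qquad\left(\tfrac{2a}{A},\,af+\varepsilon\tfrac{2ai}{A},\,f\right)$$ for some $f\in K[t]\setminus K$, $a\in\{\pm1\}$ and $\varepsilon\in\{\pm1\}$.
   Context: Solutions are triples $(x,y,z)\in K[t]^3$ with $x^2+y^2+z^2=Axyz$. The degree of the zero polynomial is $-\infty$. The height is $\max\{\deg x,\deg y,\deg z\}$. A Markoff triple is a solution with positive height and $\deg x\le\deg y\le\deg z$; it is fundamental if moreover $\deg y=\deg z$. *)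

(* Defs.v *)
From HB Require Import structures.
From mathcomp Require Import all_boot all_order all_algebra.
Set Implicit Arguments. Unset Strict Implicit. Unset Printing Implicit Defensive.
Import Order.TTheory GRing.Theory Num.Theory.
Local Open Scope ring_scope.

(* Degrees are encoded via [size] (size p = deg p + 1, size 0 = 0 encodes
   deg 0 = -oo); comparisons of degrees are comparisons of sizes. *)

Definition markoff_solution (K : fieldType) (A : K) (x y z : {poly K}) : Prop :=
  x ^+ 2 + y ^+ 2 + z ^+ 2 = A%:P * x * y * z.

Definition markoff_height_pos (K : fieldType) (x y z : {poly K}) : Prop :=
  (1 < maxn (size x) (maxn (size y) (size z)))%N.

Definition markoff_triple (K : fieldType) (A : K) (x y z : {poly K}) : Prop :=
  [/\ markoff_solution A x y z, markoff_height_pos x y z,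
      (size x <= size y)%N & (size y <= size z)%N].

Definition fundamental_markoff_triple (K : fieldType) (A : K) (x y z : {poly K}) : Prop :=
  markoff_triple A x y z /\ size y = size z.

(* Main.v *)
Require Import Defs.
From HB Require Import structures.
From mathcomp Require Import all_boot all_order all_algebra.
From mathcomp Require Import ring zify.
Import GRing.Theory.
Local Open Scope ring_scope.

Lemma arith12 (a b : nat) : (0 < a)%N -> (0 < b)%N -> 1%N = (a + b).-1 -> a = 1%N /\ b = 1%N.
Proof. lia. Qed.

Lemma size_mulC1 (K : fieldType) (p q : {poly K}) (g : K) :
  g != 0 -> p * q = g%:P -> size p = 1%N /\ size q = 1%N.
Proof.
move=> g0 E.
have p0 : p != 0 by apply/eqP => p0; move: E; rewrite p0 mul0r => /eqP; rewrite eq_sym polyC_eq0 (negbTE g0).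
have q0 : q != 0 by apply/eqP => q0; move: E; rewrite q0 mulr0 => /eqP; rewrite eq_sym polyC_eq0 (negbTE g0).
have := size_mul p0 q0; rewrite E size_polyC g0.
have := size_poly_gt0 p; have := size_poly_gt0 q; rewrite p0 q0 => h1 h2 h3.
rewrite /= in h3; apply: arith12; [exact: h2|exact: h1|exact: h3].
Qed.

Lemma core (K : fieldType) (A : K) (x y z : {poly K}) : A != 0 ->
  fundamental_markoff_triple A x y z ->
  (1 < size z)%N /\
  ((x = 0 /\ y ^+ 2 + z ^+ 2 = 0) \/
   exists c a al : K, [/\ x = c%:P, c != 0, a ^+ 2 = 1, A * c = 2%:R * a /\
      y = a%:P * z + al%:P & al ^+ 2 = - c ^+ 2]).
Proof.
move=> A0 [[Hs Hh Hxy Hyz] Hyzeq].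
rewrite /markoff_height_pos in Hh; rewrite /markoff_solution in Hs.
have Hz : (1 < size z)%N by lia.
split=> //.
have [x0|x0] := eqVneq x 0.
  left; split=> //; move: Hs; rewrite x0 expr0n /= mulr0 !mul0r add0r //.
right.
have y0 : y != 0 by rewrite -size_poly_eq0; lia.
have z0 : z != 0 by rewrite -size_poly_eq0; lia.
have Hx1 : (size x <= 1)%N.
  have e1 : size (A%:P * x * y * z) = (size x + size y + size z - 2)%N.
    rewrite -!mulrA size_Cmul // size_mul // ?size_mul // ?mulf_neq0 //.
    have := size_poly_gt0 x; rewrite x0 => hx. have := size_poly_gt0 y; rewrite y0 => hy. have := size_poly_gt0 z; rewrite z0 => hz. set sx := size x in hx *; set sy := size y in hy *; set sz := size z in hz *. lia.
  have e2 : (size (x ^+ 2 + y ^+ 2 + z ^+ 2)%R <= size z + size z - 1)%N.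
    have s1 := size_polyD (x ^+ 2 + y ^+ 2) (z ^+ 2).
    have s2 := size_polyD (x ^+ 2) (y ^+ 2).
    rewrite !expr2 in s1 s2 *.
    rewrite !size_mul // in s1 s2.
    move: s1 s2 Hxy Hyzeq Hz.
    set sx := size x; set sy := size y; set sz := size z; set t := size (x * x + y * y)%R.
    set t2 := size _; lia.
  rewrite Hs e1 in e2; lia.
set c := x`_0.
have Hxc : x = c%:P by apply: size1_polyC.
have c0 : c != 0 by rewrite -polyC_eq0 -Hxc.
set u := A * c.
have Hs' : y ^+ 2 - u%:P * (y * z) + z ^+ 2 = - (c ^+ 2)%:P.
  rewrite /u polyCM polyC_exp; apply/eqP; rewrite -subr_eq0; apply/eqP.
  transitivity (c%:P ^+ 2 + y ^+ 2 + z ^+ 2 - A%:P * c%:P * y * z); first by ring.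
  by rewrite -Hxc Hs subrr.
set N := size z.
set b := lead_coef y.
set d := lead_coef z.
have d0 : d != 0 by rewrite lead_coef_eq0.
have b0 : b != 0 by rewrite lead_coef_eq0.
have cM (p q : {poly K}) : p != 0 -> q != 0 -> size p = N -> size q = N ->
    (p * q)`_(N + N)%N.-2 = lead_coef p * lead_coef q.
  move=> p0 q0 sp sq; rewrite -lead_coefM lead_coefE size_mul // sp sq.
  by congr (_`_ _); lia.
have Hco : b * b - u * (b * d) + d * d = 0.
  have := congr1 (fun p : {poly K} => p`_(N + N)%N.-2) Hs'.
  rewrite /= !expr2 coefD coefB coefCM coefN coefC.
  rewrite cM // ?cM // ?Hyzeq //.
  have -> : ((N + N)%N.-2 == 0%N) = false by apply/eqP; lia.
  by rewrite oppr0.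
set r := b / d.
have r0 : r != 0 by rewrite mulf_neq0 // invr_eq0.
have Hr : r * r - u * r + 1 = 0.
  transitivity ((b * b - u * (b * d) + d * d) / (d * d)).
    by rewrite /r; field.
  by rewrite Hco mul0r.
set s := r^-1.
have Hrs : r * s = 1 by rewrite /s mulfV.
have Hsum : r + s = u.
  have h : r + s - u = (r * r - u * r + 1) / r.
    rewrite /s; move: r0; move: (r) (u) => r' u' r'0; field; exact: r'0.
  by apply/eqP; rewrite -subr_eq0 h Hr mul0r.
have Hfac : (y - r%:P * z) * (y - s%:P * z) = - (c ^+ 2)%:P.
  transitivity (y ^+ 2 - (r%:P + s%:P) * (y * z) + (r%:P * s%:P) * z ^+ 2); first by ring.
  by rewrite -polyCD -polyCM Hrs Hsum polyC1 mul1r.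
have cn : - c ^+ 2 != 0 by rewrite oppr_eq0 expf_neq0.
have Hfac' : (y - r%:P * z) * (y - s%:P * z) = (- c ^+ 2)%:P by rewrite polyCN.
have [h1 h2] := @size_mulC1 _ _ _ _ cn Hfac'.
set al := (y - r%:P * z)`_0.
set be := (y - s%:P * z)`_0.
have Hal : y - r%:P * z = al%:P by apply: size1_polyC; rewrite h1.
have Hbe : y - s%:P * z = be%:P by apply: size1_polyC; rewrite h2.
have Hsr : s = r.
  apply/eqP; rewrite -subr_eq0; apply/negPn/negP => ne.
  have E : (s - r)%:P * z = (al - be)%:P.
    by rewrite !polyCB -Hal -Hbe; ring.
  have := size_polyC_leq1 (al - be); rewrite -E size_Cmul //; move: Hz; set sz := size z; lia.
have Hab : be = al by apply: polyC_inj; rewrite -Hal -Hbe Hsr.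
exists c, r, al; split=> //.
- by rewrite expr2 -{2}Hsr.
- split.
  by rewrite -/u -Hsum Hsr; ring.
  by rewrite -Hal; ring.
- apply: polyC_inj; rewrite polyC_exp -Hal polyCN -Hfac Hsr; ring.
Qed.

Theorem lemma2p4 (K : fieldType) (A : K) (char2 : (2%:R : K) != 0) (A0 : A != 0) :
  ((exists x y z : {poly K}, fundamental_markoff_triple A x y z) <->
   (exists i : K, i ^+ 2 = -1)) /\
  (forall i : K, i ^+ 2 = -1 ->
   forall x y z : {poly K}, fundamental_markoff_triple A x y z ->
   exists (f : {poly K}) (a e : K),
     [/\ (1 < size f)%N, a = 1 \/ a = -1, e = 1 \/ e = -1 &
         (x = 0 /\ y = (e * i)%:P * f /\ z = f) \/
         (x = (2%:R * a / A)%:P /\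
          y = a%:P * f + (e * 2%:R * a * i / A)%:P /\ z = f)]).
Proof.
split; first split.
- move=> [x [y [z H]]].
  have [Hz [[x0 E]|[c [a [al [Hx c0 Ha [Hac Hy] Hal]]]]]] := @core _ _ _ _ _ A0 H.
  + have z0 : z != 0 by rewrite -size_poly_eq0; move: Hz; set sz := size z; lia.
    have d0 : lead_coef z != 0 by rewrite lead_coef_eq0.
    exists (lead_coef y / lead_coef z).
    have E' : y ^+ 2 = - z ^+ 2 by apply/eqP; rewrite -subr_eq0 opprK E.
    have := congr1 lead_coef E'; rewrite lead_coefN !lead_coef_exp => E2.
    rewrite expr_div_n E2; field; exact: d0.
  + exists (al / c); rewrite expr_div_n Hal; field; exact: c0.
- move=> [i Hi].
  have i0 : i != 0 by apply/eqP => i0; move: Hi; rewrite i0 expr0n /= => /eqP; rewrite eq_sym oppr_eq0 oner_eq0.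
  exists 0, (i%:P * 'X), 'X; split; [split|].
  + rewrite /markoff_solution; rewrite mulr0 !mul0r.
    transitivity (((i ^+ 2)%:P + 1) * 'X ^+ 2); first by rewrite polyC_exp; ring.
    by rewrite Hi polyCN polyC1 addNr mul0r.
  + by rewrite /markoff_height_pos size_Cmul // size_polyX size_poly0.
  + by rewrite size_poly0.
  + by rewrite size_Cmul // size_polyX.
  + by rewrite size_Cmul // size_polyX.
- move=> i Hi x y z H.
  have [Hz [[x0 E]|[c [a [al [Hx c0 Ha [Hac Hy] Hal]]]]]] := @core _ _ _ _ _ A0 H.
  + have F : (y - i%:P * z) * (y + i%:P * z) = 0.
      transitivity (y ^+ 2 - (i ^+ 2)%:P * z ^+ 2); first by rewrite polyC_exp; ring.
      by rewrite Hi polyCN polyC1 mulN1r opprK E.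
    move/eqP: F; rewrite mulf_eq0 => /orP [] /eqP F.
    * exists z, 1, 1; split=> //; [by left|by left|left; split=> //; split=> //].
      by rewrite mul1r; apply/eqP; rewrite -subr_eq0 F.
    * exists z, 1, (-1); split=> //; [by left|by right|left; split=> //; split=> //].
      by rewrite mulN1r polyCN mulNr; apply/eqP; rewrite -subr_eq0 opprK F.
  + have ha : a = 1 \/ a = -1 by move/eqP: Ha; rewrite sqrf_eq1 => /orP [] /eqP; [left|right].
    have hc : c = 2%:R * a / A by rewrite -Hac; field.
    have F : (al - i * c) * (al + i * c) = 0.
      transitivity (al ^+ 2 - i ^+ 2 * c ^+ 2); first by ring.
      by rewrite Hal Hi; ring.
    move/eqP: F; rewrite mulf_eq0 => /orP [] /eqP F.
    * exists z, a, 1; split=> //; [by left|right; split; [by rewrite Hx hc|split=> //]].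
      rewrite Hy; congr (_ + _%:P).
      have -> : al = i * c by apply/eqP; rewrite -subr_eq0 F.
      rewrite hc; field; exact: A0.
    * exists z, a, (-1); split=> //; [by right|right; split; [by rewrite Hx hc|split=> //]].
      rewrite Hy; congr (_ + _%:P).
      have -> : al = - (i * c) by apply/eqP; rewrite -subr_eq0 opprK F.
      rewrite hc; field; exact: A0.
Qed.
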